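(* Let $n\ge0$ and let $\mathfrak g$ and $\mathfrak q$ be $n$-Lie-stem Leibniz algebras with $\mathfrak g\sim_n\mathfrak q$. Then $\mathcal Z_n^{\mathsf{Lie}}(\mathfrak g)\cong\mathcal Z_n^{\mathsf{Lie}}(\mathfrak q)$.
   Context: All Leibniz algebras are over a field $\mathbb{K}$ with $\frac12\in\mathbb{K}$. A Leibniz algebra is a vector space $\mathfrak g$ with a bilinear bracket $[-,-]$ satisfying $[x,[y,z]]=[[x,y],z]-[[x,z],y]$. For $x,y\in\mathfrak g$ put $[x,y]_{lie}=[x,y]+[y,x]$. For two-sided ideals $\mathfrak m,\mathfrak n$ of $\mathfrak g$, $[\mathfrak m,\mathfrak n]_{\mathsf{Lie}}$ denotes the two-sided ideal of $\mathfrak g$ generated by $\{[m,x]_{lie}: m\in\mathfrak m, x\in\mathfrak n\}$. Lower Lie-central series: $\gamma_1^{\mathsf{Lie}}(\mathfrak g)=\mathfrak g$, $\gamma_i^{\mathsf{Lie}}(\mathfrak g)=[\gamma_{i-1}^{\mathsf{Lie}}(\mathfrak g),\mathfrak g]_{\mathsf{Lie}}$ for $i\ge2$. Upper Lie-central series: $\mathcal Z_0^{\mathsf{Lie}}(\mathfrak g)=0$, $\mathcal Z_i^{\mathsf{Lie}}(\mathfrak g)=\{x\in\mathfrak g:[x,y]_{lie}\in\mathcal Z_{i-1}^{\mathsf{Lie}}(\mathfrak g)\ \text{for all } y\in\mathfrak g\}$ for $i\ge1$. A Leibniz algebra $\mathfrak g$ is an $n$-Lie-stem Leibniz algebra if $\mathcal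 Z_n^{\mathsf{Lie}}(\mathfrak g)\subseteq\gamma_{n+1}^{\mathsf{Lie}}(\mathfrak g)$. For $n\ge0$, Leibniz algebras $\mathfrak g_1,\mathfrak g_2$ are $n$-Lie-isoclinic, written $\mathfrak g_1\sim_n\mathfrak g_2$, if there exist Leibniz algebra isomorphisms $\eta:\mathfrak g_1/\mathcal Z_n^{\mathsf{Lie}}(\mathfrak g_1)\to\mathfrak g_2/\mathcal Z_n^{\mathsf{Lie}}(\mathfrak g_2)$ and $\xi:\gamma_{n+1}^{\mathsf{Lie}}(\mathfrak g_1)\to\gamma_{n+1}^{\mathsf{Lie}}(\mathfrak g_2)$ such that $\xi([\cdots[[x_1,x_2]_{lie},x_3]_{lie},\ldots,x_{n+1}]_{lie})=[\cdots[[y_1,y_2]_{lie},y_3]_{lie},\ldots,y_{n+1}]_{lie}$ whenever $x_i\in\mathfrak g_1$, $y_i\in\mathfrak g_2$ satisfy $\eta(x_i+\mathcal Z_n^{\mathsf{Lie}}(\mathfrak g_1))=y_i+\mathcal Z_n^{\mathsf{Lie}}(\mathfrak g_2)$ for $i=1,\ldots,n+1$. *)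

(* Defs.v *)
From HB Require Import structures.
From mathcomp Require Import all_boot all_order all_algebra.
Set Implicit Arguments. Unset Strict Implicit. Unset Printing Implicit Defensive.
Import GRing.Theory.
Local Open Scope ring_scope.

Record leibnizAlg (K : fieldType) := LeibnizAlg {
  lcarrier :> lmodType K;
  lbr : lcarrier -> lcarrier -> lcarrier;
  lbr_linl : forall (a : K) (x y z : lcarrier),
      lbr (a *: x + y) z = a *: lbr x z + lbr y z;
  lbr_linr : forall (a : K) (x y z : lcarrier),
      lbr z (a *: x + y) = a *: lbr z x + lbr z y;
  lbr_leibniz : forall x y z : lcarrier,
      lbr x (lbr y z) = lbr (lbr x y) z - lbr (lbr x z) y }.

Section Leibniz.
Variable K : fieldType.
Variable g : leibnizAlg K.

Definition lie (x y : g) : g := lbr x y + lbr y x.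

Definition is_ideal (I : g -> Prop) : Prop :=
  [/\ I 0,
      (forall x y, I x -> I y -> I (x + y)),
      (forall (a : K) x, I x -> I (a *: x)),
      (forall x y, I x -> I (lbr x y)) &
      (forall x y, I y -> I (lbr x y))].

Definition gen_ideal (S : g -> Prop) : g -> Prop :=
  fun x => forall I, is_ideal I -> (forall s, S s -> I s) -> I x.

Definition lie_comm_ideal (M : g -> Prop) : g -> Prop :=
  gen_ideal (fun z => exists m x, M m /\ z = lie m x).

(* lower Lie-central series, indexed so that gammaLie 1 = g;
   gammaLie 0 is also set to g (unused). *)
Fixpoint gammaLie (i : nat) : g -> Prop :=
  match i with
  | 0 => fun _ => True
  | 1 => fun _ => True
  | j.+1 => lie_comm_ideal (gammaLie j)
  end.

Fixpoint ZLie (i : nat) : g -> Prop :=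
  match i with
  | 0 => fun x => x = 0
  | j.+1 => fun x => forall y, ZLie j (lie x y)
  end.

Fixpoint lcomm (xs : nat -> g) (k : nat) : g :=
  match k with
  | 0 => xs 0%N
  | j.+1 => lie (lcomm xs j) (xs j.+1)
  end.

Definition lie_stem (n : nat) : Prop :=
  forall x, ZLie n x -> gammaLie n.+1 x.

End Leibniz.

Arguments lie {K} g x y.
Arguments is_ideal {K} g I.
Arguments gen_ideal {K} g S x.
Arguments lie_comm_ideal {K} g M x.
Arguments gammaLie {K} g i x.
Arguments ZLie {K} g i x.
Arguments lcomm {K} g xs k.
Arguments lie_stem {K} g n.

Definition sub_iso (K : fieldType) (g1 g2 : leibnizAlg K)
  (A : g1 -> Prop) (B : g2 -> Prop) (f : g1 -> g2) : Prop :=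
  (forall x, A x -> B (f x)) /\
  (forall x y, A x -> A y -> f (x + y) = f x + f y) /\
  (forall (a : K) x, A x -> f (a *: x) = a *: f x) /\
  (forall x y, A x -> A y -> f (lbr x y) = lbr (f x) (f y)) /\
  (forall x y, A x -> A y -> f x = f y -> x = y) /\
  (forall y, B y -> exists2 x, A x & f x = y).

(* An isomorphism of quotient Leibniz algebras g1/N1 -> g2/N2 (N1, N2 ideals),
   represented by a lift eta : g1 -> g2 (eta(x+N1) = eta x + N2). *)
Definition quot_iso (K : fieldType) (g1 g2 : leibnizAlg K)
  (N1 : g1 -> Prop) (N2 : g2 -> Prop) (eta : g1 -> g2) : Prop :=
  (forall x y, N1 (x - y) -> N2 (eta x - eta y)) /\
  (forall x y, N2 (eta (x + y) - (eta x + eta y))) /\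
  (forall (a : K) x, N2 (eta (a *: x) - a *: eta x)) /\
  (forall x y, N2 (eta (lbr x y) - lbr (eta x) (eta y))) /\
  (forall x y, N2 (eta x - eta y) -> N1 (x - y)) /\
  (forall y, exists x, N2 (eta x - y)).

Definition lie_isoclinic (K : fieldType) (n : nat) (g1 g2 : leibnizAlg K) : Prop :=
  exists eta : g1 -> g2,
    quot_iso (ZLie g1 n) (ZLie g2 n) eta /\
  exists xi : g1 -> g2,
    sub_iso (gammaLie g1 n.+1) (gammaLie g2 n.+1) xi /\
    forall (xs : nat -> g1) (ys : nat -> g2),
      (forall i, (i <= n)%N -> ZLie g2 n (eta (xs i) - ys i)) ->
      xi (lcomm g1 xs n) = lcomm g2 ys n.

Definition sub_isomorphic (K : fieldType) (g1 g2 : leibnizAlg K)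
  (A : g1 -> Prop) (B : g2 -> Prop) : Prop :=
  exists f : g1 -> g2, sub_iso A B f.

(* Main.v *)
Require Import Defs.
From HB Require Import structures.
From mathcomp Require Import all_boot all_order all_algebra.
Set Implicit Arguments. Unset Strict Implicit. Unset Printing Implicit Defensive.
Import GRing.Theory.
Local Open Scope ring_scope.

Section Helpers.
Variable K : fieldType.
Variable g : leibnizAlg K.
Implicit Types x y z u v : g.

Lemma lbrDl x y z : lbr x z + lbr y z = lbr (x + y) z.
Proof. by have := lbr_linl 1 x y z; rewrite !scale1r. Qed.
Lemma lbrDr x y z : lbr z x + lbr z y = lbr z (x + y).
Proof. by have := lbr_linr 1 x y z; rewrite !scale1r. Qed.
Lemma lbr0l z : lbr (0 : g) z = 0.
Proof.
have := lbrDl 0 0 z; rewrite addr0 => /eqP.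
by rewrite -subr_eq0 addrK => /eqP.
Qed.
Lemma lbr0r z : lbr z (0 : g) = 0.
Proof.
have := lbrDr 0 0 z; rewrite addr0 => /eqP.
by rewrite -subr_eq0 addrK => /eqP.
Qed.
Lemma lbrZl (a : K) x z : lbr (a *: x) z = a *: lbr x z.
Proof. by rewrite -[a *: x]addr0 lbr_linl lbr0l addr0. Qed.

Lemma lieC x y : lie g x y = lie g y x.
Proof. by rewrite /lie addrC. Qed.
Lemma lie_linl (a : K) x y z : lie g (a *: x + y) z = a *: lie g x z + lie g y z.
Proof.
rewrite /lie lbr_linl lbr_linr scalerDr.
by rewrite addrACA.
Qed.
Lemma lie0l z : lie g 0 z = 0.
Proof. by rewrite /lie lbr0l lbr0r addr0. Qed.

Lemma lbr_lie y a b : lbr y (lie g a b) = 0.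
Proof.
rewrite /lie -lbrDr !lbr_leibniz.
by rewrite addrC addrA subrK subrr.
Qed.

Lemma ZLie_lin k (a : K) x y : ZLie g k x -> ZLie g k y -> ZLie g k (a *: x + y).
Proof.
elim: k x y => [|k IH] x y /=.
  by move=> -> ->; rewrite scaler0 addr0.
by move=> Hx Hy z; rewrite lie_linl; apply: IH.
Qed.
Lemma ZLie0 k : ZLie g k 0.
Proof. elim: k => [|k IH] //= z; by rewrite lie0l. Qed.
Lemma ZLieD k x y : ZLie g k x -> ZLie g k y -> ZLie g k (x + y).
Proof. by move=> Hx Hy; rewrite -[x]scale1r; apply: ZLie_lin. Qed.
Lemma ZLieB k x y : ZLie g k x -> ZLie g k y -> ZLie g k (x - y).
Proof.
move=> Hx Hy; rewrite addrC -scaleN1r; apply: ZLie_lin => //.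
Qed.
Lemma ZLie_mono k x : ZLie g k x -> ZLie g k.+1 x.
Proof.
elim: k x => [|k IH] x /=.
  by move=> -> y; rewrite lie0l.
by move=> H y; apply: IH.
Qed.
Lemma ZLie_le j k x : (j <= k)%N -> ZLie g j x -> ZLie g k x.
Proof.
move=> Hjk Hj; elim: k Hjk => [|k IH]; first by rewrite leqn0 => /eqP <-.
rewrite leq_eqVlt => /orP [/eqP <- //|]; rewrite ltnS => /IH; exact: ZLie_mono.
Qed.

Lemma gen_ideal_ideal S : is_ideal g (gen_ideal g S).
Proof.
split.
- by move=> I [].
- by move=> x y Hx Hy I HI HS; case: (HI) => _ H _ _ _; apply: H; [apply: Hx|apply: Hy].
- by move=> a x Hx I HI HS; case: (HI) => _ _ H _ _; apply: H; apply: Hx.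
- by move=> x y Hx I HI HS; case: (HI) => _ _ _ H _; apply: H; apply: Hx.
- by move=> x y Hx I HI HS; case: (HI) => _ _ _ _ H; apply: H; apply: Hx.
Qed.

Lemma ideal_lie I x y : is_ideal g I -> I x -> I (lie g x y).
Proof. by case=> _ HD _ Hl Hr Hx; apply: HD; [apply: Hl|apply: Hr]. Qed.

Lemma ideal_lin I (a : K) x y : is_ideal g I -> I x -> I y -> I (a *: x + y).
Proof. by case=> _ HD HZ _ _ Hx Hy; apply: HD => //; apply: HZ. Qed.

Lemma lcomm_ext (xs ys : nat -> g) k :
  (forall i, (i <= k)%N -> xs i = ys i) -> lcomm g xs k = lcomm g ys k.
Proof.
elim: k => [|k IH] H /=; first by apply: H.
by rewrite IH ?H // => i Hi; apply: H; apply: leqW.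
Qed.

Definition ext (xs : nat -> g) k y := fun i => if i == k then y else xs i.
Definition shift (xs : nat -> g) :=
  fun i => if i == 0%N then lie g (xs 0%N) (xs 1%N) else xs i.+1.

Lemma lcomm_shift xs j : lcomm g (shift xs) j = lcomm g xs j.+1.
Proof. by elim: j => [|j IH] //=; rewrite IH. Qed.

Lemma lie_lcomm xs k y : lie g (lcomm g xs k) y = lcomm g (ext xs k.+1 y) k.+1.
Proof.
rewrite /= /ext eqxx; congr (lie g _ _); apply: lcomm_ext => i Hi.
by rewrite ifN // neq_ltn ltnS Hi.
Qed.

Lemma lie_lcomm_shift xs k y :
  lie g (lcomm g xs k.+1) y = lcomm g (shift (ext xs k.+2 y)) k.+1.
Proof. by rewrite lcomm_shift lie_lcomm. Qed.

Lemma lcomm_gamma xs k : gammaLie g k.+1 (lcomm g xs k).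
Proof.
elim: k => [|k IH] //= I HI HS; apply: HS.
by exists (lcomm g xs k), (xs k.+1).
Qed.

Lemma gamma_ideal k : is_ideal g (gammaLie g k.+2).
Proof. exact: gen_ideal_ideal. Qed.

Inductive span (k : nat) : g -> Prop :=
| sp_gen xs : span k (lcomm g xs k)
| sp0 : span k 0
| spc (a : K) u v : span k u -> span k v -> span k (a *: u + v).

Lemma span_rann k x y : span k.+1 x -> lbr y x = 0.
Proof.
elim=> [xs||a u v _ Hu _ Hv]; first by rewrite /= lbr_lie.
  by rewrite lbr0r.
by rewrite lbr_linr Hu Hv scaler0 addr0.
Qed.

Lemma span_lie k u y : span k u -> span k.+1 (lie g u y).
Proof.
elim=> [xs||a u' v _ Hu _ Hv].
- by rewrite lie_lcomm; apply: sp_gen.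
- by rewrite lie0l; apply: sp0.
- by rewrite lie_linl; apply: spc.
Qed.

Lemma span_lie_same k u y : span k.+1 u -> span k.+1 (lie g u y).
Proof.
elim=> [xs||a u' v _ Hu _ Hv].
- by rewrite lie_lcomm_shift; apply: sp_gen.
- by rewrite lie0l; apply: sp0.
- by rewrite lie_linl; apply: spc.
Qed.

Lemma span_ideal k : is_ideal g (span k.+1).
Proof.
split.
- exact: sp0.
- by move=> x y Hx Hy; rewrite -[x]scale1r; apply: spc.
- by move=> a x Hx; rewrite -[a *: x]addr0; apply: spc => //; apply: sp0.
- move=> x y Hx.
  have -> : lbr x y = lie g x y by rewrite /lie (span_rann y Hx) addr0.
  exact: span_lie_same.
- by move=> x y Hy; rewrite (span_rann x Hy); apply: sp0.
Qed.

Lemma gamma_span k x : gammaLie g k.+1 x -> span k x.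
Proof.
elim: k x => [|k IH] x /=.
  by move=> _; have -> : x = lcomm g (fun _ => x) 0 by []; apply: sp_gen.
move=> Hx; apply: Hx; first exact: span_ideal.
by move=> s [m [y [Hm ->]]]; apply: span_lie; apply: IH.
Qed.

Lemma span_gamma k x : span k x -> gammaLie g k.+1 x.
Proof.
elim=> [xs||a u v _ Hu _ Hv]; first exact: lcomm_gamma.
  by case: k => [|k] //; case: (gamma_ideal k).
case: k Hu Hv => [|k] // Hu Hv; exact: (ideal_lin a (gamma_ideal k) Hu Hv).
Qed.

End Helpers.

Lemma eta_lie (K : fieldType) (g q : leibnizAlg K) (N : q -> Prop) (eta : g -> q) :
  (forall x y, N x -> N y -> N (x + y)) ->
  (forall x y, N (eta (x + y) - (eta x + eta y))) ->
  (forall x y, N (eta (lbr x y) - lbr (eta x) (eta y))) ->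
  forall a b, N (eta (lie g a b) - lie q (eta a) (eta b)).
Proof.
move=> HD Hadd Hbr a b.
have -> : eta (lie g a b) - lie q (eta a) (eta b) =
  (eta (lbr a b + lbr b a) - (eta (lbr a b) + eta (lbr b a))) +
  ((eta (lbr a b) - lbr (eta a) (eta b)) + (eta (lbr b a) - lbr (eta b) (eta a))).
  rewrite /lie; set A := eta (lbr a b + lbr b a); set B := eta (lbr a b);
  set C := eta (lbr b a).
  by rewrite !opprD !addrA (addrAC _ (-C) B) subrK (addrAC _ (- lbr (eta a) (eta b)) C) subrK.
by apply: (HD) => //; apply: (HD).
Qed.

Theorem mainTheorem18 (K : fieldType) (two_neq0 : (2%:R : K) != 0)
  (n : nat) (g q : leibnizAlg K) :
  lie_stem g n -> lie_stem q n -> lie_isoclinic n g q ->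
  sub_isomorphic (ZLie g n) (ZLie q n).
Proof.
case: n => [|m] Sg Sq.
  move=> _; exists (fun _ => 0); split; first by move=> x _ /=.
  split; first by move=> x y _ _; rewrite addr0.
  split; first by move=> a x _; rewrite scaler0.
  split; first by move=> x y _ _; rewrite lbr0l.
  split; first by move=> x y /= -> ->.
  by move=> y /= ->; exists 0.
move=> [eta [[Hq1 [Hq2 [Hq3 [Hq4 [Hq5 Hq6]]]]] [xi [[Hs1 [Hs2 [Hs3 [Hs4 [Hs5 Hs6]]]]] Hcomm]]]].
set n := m.+1.
have gI := gamma_ideal g m.
have qI := gamma_ideal q m.
have G0 : gammaLie g m.+2 0 by case: gI.
have xi0 : xi 0 = 0.
  have := Hs2 0 0 G0 G0; rewrite addr0 => /esym/eqP.
  by rewrite -subr_eq0 addrK => /eqP.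
have ZD := @ZLieD K q n.
have etal := eta_lie ZD Hq2 Hq4.
have clA : forall x : g, span n x -> forall y w, ZLie q n (eta y - w) ->
    xi (lie g x y) = lie q (xi x) w.
  move=> x; elim=> [xs||a u v Su Hu Sv Hv] y w Hyw.
  - rewrite lie_lcomm_shift.
    have -> : xi (lcomm g xs n) = lcomm q (fun i => eta (xs i)) n.
      by apply: Hcomm => i _; rewrite subrr; apply: ZLie0.
    rewrite lie_lcomm_shift; apply: Hcomm => -[|i] Hi.
      by rewrite /shift /ext /=; apply: etal.
    rewrite /shift /ext /=; case: eqP => _ //.
    by rewrite subrr; exact: (@ZLie0 K q n).
  - by rewrite lie0l xi0 lie0l.
  - have Gu := span_gamma Su; have Gv := span_gamma Sv.
    have Glu := ideal_lie y gI Gu; have Glv := ideal_lie y gI Gv.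
    have GZ : forall b (t : g), gammaLie g m.+2 t -> gammaLie g m.+2 (b *: t).
      by case: gI.
    rewrite lie_linl Hs2; last 2 first.
    - exact: GZ.
    - exact: Glv.
    rewrite Hs3 // (Hu y w Hyw) (Hv y w Hyw) Hs2 ?Hs3 //; last exact: GZ.
    by rewrite (@lie_linl K q).
have clA' : forall x, gammaLie g m.+2 x -> forall y w, ZLie q n (eta y - w) ->
    xi (lie g x y) = lie q (xi x) w.
  by move=> x Hx; apply: clA; apply: gamma_span.
have fwd : forall k x, (k <= n)%N -> gammaLie g m.+2 x -> ZLie g k x -> ZLie q k (xi x).
  elim=> [|k IH] x Hk Gx /=; first by move=> ->.
  move=> Zx w; have [y Hy] := Hq6 w.
  rewrite -(clA' x Gx y w Hy); apply: IH; first exact: ltnW.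
    exact: (ideal_lie y gI Gx).
  exact: Zx.
have bwd : forall k x, gammaLie g m.+2 x -> ZLie q k (xi x) -> ZLie g k x.
  elim=> [|k IH] x Gx /=.
    by move=> H0; apply: Hs5 => //; rewrite H0 xi0.
  move=> Zx y; apply: IH; first exact: (ideal_lie y gI Gx).
  rewrite (clA' x Gx y (eta y)); first exact: Zx.
  by rewrite subrr; apply: ZLie0.
exists xi; split; first by move=> x Zx; apply: fwd => //; apply: Sg.
split; first by move=> x y Hx Hy; apply: Hs2; apply: Sg.
split; first by move=> a x Hx; apply: Hs3; apply: Sg.
split; first by move=> x y Hx Hy; apply: Hs4; apply: Sg.
split; first by move=> x y Hx Hy; apply: Hs5; apply: Sg.
move=> v Zv; have [x Gx Ex] := Hs6 v (Sq v Zv).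
exists x => //; apply: (bwd n x Gx); by rewrite Ex.
Qed.
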